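(* Let $b\ge2$ be an integer, $\gamma\in(0,1)$, and let $\phi$ be a $\mathbb{Z}$-periodic Lipschitz function satisfying condition (H). Then the family $\{m_x\}_{x\in[0,1]}$ is jointly uniformly continuous across scales: for every $\varepsilon>0$ there exists $\delta>0$ such that for every $x\in[0,1]$, every $y\in\mathbb{R}$ and every $r\in(0,1)$, $$m_x(B(y,\delta r))\le\varepsilon\, m_x(B(y,r)).$$
   Context: $\Lambda=\{0,\dots,b-1\}$, $\Sigma=\Lambda^{\mathbb{Z}_+}$, $\nu$ uniform on $\Lambda$. $S(x,\mathbf{j})=\sum_{n\ge1}\gamma^{n-1}\phi\big(\frac{x+j_1+j_2b+\cdots+j_nb^{n-1}}{b^n}\big)$ for $\mathbf{j}\in\Sigma$, $x\in[0,1]$. Condition (H): for all $\mathbf{i}\neq\mathbf{j}\in\Sigma$, $x\mapsto S(x,\mathbf{j})-S(x,\mathbf{i})$ is not identically zero on $[0,1]$. $m_x$ is the image of $\nu^{\mathbb{Z}_+}$ under $\mathbf{j}\mapsto S(x,\mathbf{j})$. *)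

(* Defs.v *)
From HB Require Import structures.
From mathcomp Require Import all_boot all_order all_algebra.
From mathcomp Require Import all_classical all_reals all_analysis.
Unset Printing Implicit Defensive.
Import Order.TTheory GRing.Theory Num.Theory numFieldNormedType.Exports.
Local Open Scope classical_set_scope.
Local Open Scope ring_scope.

(* For b >= 1 (in particular b >= 2)
   the type 'I_(b.-1).+1 is exactly 'I_b, i.e. {0,...,b-1}; writing it this
   way makes it syntactically inhabited (needed for the pointed structure). *)
Definition Lam (b : nat) : Type := 'I_(b.-1).+1.
HB.instance Definition _ (b : nat) := Finite.on (Lam b).
HB.instance Definition _ (b : nat) := isPointed.Build (Lam b) ord0.

(* Sigma = Lambda^{Z_+}: a sequence j = (j_1, j_2, ...) is stored as
   j : nat -> Lam b with j_n = j (n-1). *)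
Definition Sig (b : nat) := nat -> Lam b.


Definition cylinder (b n : nat) (w : 'I_n -> Lam b) : set (Sig b) :=
  [set j | forall k : 'I_n, j k = w k].

Definition cylinders (b : nat) : set (set (Sig b)) :=
  [set C | exists n (w : 'I_n -> Lam b), C = @cylinder b n w].

Notation SigM b := (g_sigma_algebraType (cylinders b)).

(* P is the Bernoulli product measure nu^{Z_+}, nu uniform on Lambda:
   every cylinder of length n has mass b^{-n}.  (This determines P uniquely
   on the product sigma-algebra, by the pi-lambda theorem.) *)
Definition is_uniform_product (R : realType) (b : nat)
    (P : probability (SigM b) R) : Prop :=
  forall n (w : 'I_n -> Lam b),
    P (@cylinder b n w) = ((b%:R : R) ^- n)%:E.

(* S(x, j) = sum_{n >= 1} gamma^{n-1} phi((x + j_1 + j_2 b + ... + j_n b^{n-1}) / b^n),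
   reindexed with n = m+1, m >= 0; the series is the limit of its partial
   sums (it converges absolutely since phi is bounded and 0<gamma<1). *)
Definition Sfun (R : realType) (b : nat) (gamma : R) (phi : R -> R)
    (x : R) (j : Sig b) : R :=
  limn (fun N : nat => \sum_(0 <= m < N)
    (gamma ^+ m * phi ((x + \sum_(k < m.+1) ((j k : nat)%:R * (b%:R) ^+ k))
                       / (b%:R) ^+ m.+1))).

Definition Zperiodic (R : realType) (phi : R -> R) : Prop :=
  forall t : R, phi (t + 1) = phi t.

Definition is_lipschitz (R : realType) (phi : R -> R) : Prop :=
  exists L : R, forall s t : R, `|phi s - phi t| <= L * `|s - t|.

Definition condH (R : realType) (b : nat) (gamma : R) (phi : R -> R) : Prop :=
  forall i j : Sig b, i <> j ->
    ~ (forall x : R, 0 <= x <= 1 ->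
         Sfun R b gamma phi x j - Sfun R b gamma phi x i = 0).

Definition mx (R : realType) (b : nat) (gamma : R) (phi : R -> R)
    (P : probability (SigM b) R) (x : R) (A : set R) : \bar R :=
  P ((Sfun R b gamma phi x : SigM b -> R) @^-1` A).

(* Main.v *)
Require Import Defs.
From HB Require Import structures.
From mathcomp Require Import all_boot all_order all_algebra.
From mathcomp Require Import all_classical all_reals all_analysis.
From mathcomp Require Import ring lra.
Import Order.TTheory GRing.Theory Num.Theory numFieldNormedType.Exports.
Local Open Scope classical_set_scope.
Local Open Scope ring_scope.

Lemma geo_small (R : realType) (q e : R) : 0 <= q < 1 -> 0 < e ->
  exists n : nat, q ^+ n < e.
Proof.
move=> /andP[q0 q1] e0.
have h : `|q| < 1 by rewrite ger0_norm.
have := cvgr_lt _ (cvg_expr h) _ e0.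
move=> [N _ HN]; exists N; exact: (HN N (leqnn N)).
Qed.

Lemma geo_zero (R : realType) (q c z : R) : 0 <= q < 1 ->
  (forall n : nat, `|z| <= c * q ^+ n) -> z = 0.
Proof.
move=> hq H; apply/eqP; apply: contraT => z0.
have nz : 0 < `|z| by rewrite normr_gt0.
have c0 : 0 <= c by have := H 0%N; rewrite expr0 mulr1; apply: le_trans.
have [ce|cpos] := eqVneq c 0.
  by have := H 0%N; rewrite ce mul0r => /(lt_le_trans nz); rewrite ltxx.
have cp : 0 < c by rewrite lt0r cpos.
have [n hn] := @geo_small _ _ _ hq (divr_gt0 nz cp).
have h2 : c * q ^+ n < `|z| by rewrite mulrC -ltr_pdivlMr.
by have := H n; rewrite leNgt h2.
Qed.

Lemma geo_le (R : realType) (q a c d : R) : 0 <= q < 1 ->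
  (forall n : nat, a <= c + d * q ^+ n) -> a <= c.
Proof.
move=> hq H; rewrite leNgt; apply/negP => ca.
have q0 : 0 <= q by case/andP: hq.
have : a - c = 0.
  apply: (@geo_zero _ q `|d|) => // n.
  rewrite gtr0_norm ?subr_gt0 //.
  have h1 : d * q^+n <= `|d| * q^+n by apply: ler_wpM2r; [exact: exprn_ge0 | exact: ler_norm].
  have := H n; lra.
by move/eqP; rewrite subr_eq0 => /eqP ac; move: ca; rewrite ac ltxx.
Qed.

Lemma tail_gen (R : realType) (a : nat -> R) (M g : R) : 0 < g < 1 ->
  (forall m, `|a m| <= M * g ^+ m) ->
  forall N, `|limn (fun N => \sum_(0 <= m < N) a m) - \sum_(0 <= m < N) a m|
     <= M / (1 - g) * g ^+ N.
Proof.
move=> /andP[g0 g1] ha.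
have M0 : 0 <= M by have := ha 0%N; rewrite expr0 mulr1; apply: le_trans.
have g1' : 0 < 1 - g by rewrite subr_gt0.
pose s : R ^nat := fun N => \sum_(0 <= m < N) a m.
pose w : R ^nat := fun N => M / (1 - g) * g ^+ N.
pose u : R ^nat := fun N => s N - w N.
pose v : R ^nat := fun N => s N + w N.
have sS N : s N.+1 = s N + a N by rewrite /s big_nat_recr.
have wS N : w N.+1 = w N - M * g ^+ N.
  rewrite /w exprS; field; lra.
have w0 N : 0 <= w N by rewrite /w mulr_ge0 ?divr_ge0 ?exprn_ge0 // ltW.
have aN N : - (M * g ^+ N) <= a N /\ a N <= M * g ^+ N.
  by have := ha N; rewrite ler_norml => /andP[].
have ui : nondecreasing_seq u.
  apply/nondecreasing_seqP => N; rewrite /u sS wS; have := aN N; lra.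
have vd : nonincreasing_seq v.
  apply/nonincreasing_seqP => N; rewrite /v sS wS; have := aN N; lra.
have ub : has_ubound (range u).
  exists (v 0%N) => _ [N _ <-]; apply: (@le_trans _ _ (v N)).
    by rewrite /u /v; have := w0 N; lra.
  by apply: vd.
have cu : cvgn u by apply: nondecreasing_is_cvgn.
have wc : w @ \oo --> M / (1 - g) * 0.
  apply: cvgMl_tmp; apply: cvg_expr; rewrite ger0_norm //; exact: ltW.
rewrite mulr0 in wc.
have sE : s = u + w by apply/funext => N; rewrite /u /= subrK.
have sc : s @ \oo --> limn u + 0 by rewrite sE; apply: cvgD.
have vE : v = u + w + w by apply/funext => N; rewrite /v /u /= subrK.
have vc : v @ \oo --> limn u + 0 + 0 by rewrite vE; apply: cvgD => //; apply: cvgD.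
rewrite !addr0 in sc vc.
have Sl : limn s = limn u := cvg_lim (@Rhausdorff R) sc.
have Vl : limn v = limn u := cvg_lim (@Rhausdorff R) vc.
move=> N.
have h1 := nondecreasing_cvgn_le ui cu N.
have h2 := nonincreasing_cvgn_ge vd (cvgP _ vc) N.
rewrite -/(s N) -/(w N) -/(limn s) Sl.
rewrite Vl /v in h2; rewrite /u in h1.
rewrite ler_norml; apply/andP; split; lra.
Qed.

Definition dsum (R : realType) (b : nat) (j : Sig b) (n : nat) : R :=
  \sum_(k < n) ((j k : nat)%:R * (b%:R : R) ^+ k).
Definition targ (R : realType) (b : nat) (x : R) (j : Sig b) (m : nat) : R :=
  (x + dsum R b j m.+1) / (b%:R) ^+ m.+1.
Definition term (R : realType) (b : nat) (g : R) (phi : R -> R) (x : R)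
  (j : Sig b) (m : nat) : R := g ^+ m * phi (targ R b x j m).
Definition psum (R : realType) (b : nat) (g : R) (phi : R -> R) (x : R)
  (j : Sig b) (N : nat) : R := \sum_(0 <= m < N) term R b g phi x j m.

Lemma SfunE (R : realType) (b : nat) (g : R) (phi : R -> R) x j :
  Sfun R b g phi x j = limn (psum R b g phi x j).
Proof. by []. Qed.

Lemma digit_le (R : realType) (b : nat) (a : Lam b) : (0 < b)%N ->
  (a : nat)%:R <= (b%:R : R) - 1.
Proof.
move=> b0; have ab : (a < b)%N.
  have h := ltn_ord a; move: (nat_of_ord a) h => k; by rewrite prednK.
by rewrite lerBrDr natr1 ler_nat.
Qed.

Lemma digit_ge0 (R : realType) (b : nat) (a : Lam b) : 0 <= ((a : nat)%:R : R).
Proof. by rewrite ler0n. Qed.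

Lemma dsum_bnd (R : realType) (b : nat) (j : Sig b) n : (0 < b)%N ->
  0 <= dsum R b j n <= (b%:R) ^+ n - 1.
Proof.
move=> b0; elim: n => [|n /andP[IH1 IH2]].
  by rewrite /dsum big_ord0 expr0 subrr lexx.
rewrite /dsum big_ord_recr /= -/(dsum R b j n).
have bn : 0 <= (b%:R : R) ^+ n by rewrite exprn_ge0 // ler0n.
have d1 := @digit_le R b (j n) b0.
have d0 := @digit_ge0 R b (j n).
have h1 : (j n : nat)%:R * (b%:R : R) ^+ n <= ((b%:R : R) - 1) * b%:R ^+ n.
  by apply: ler_wpM2r.
rewrite exprS; apply/andP; split.
  by apply: addr_ge0 => //; apply: mulr_ge0.
by move: h1; rewrite mulrBl mul1r; lra.
Qed.

Lemma bpos (R : realType) (b : nat) n : (0 < b)%N -> 0 < (b%:R : R) ^+ n.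
Proof. by move=> b0; rewrite exprn_gt0 // ltr0n. Qed.

Lemma targ01 (R : realType) (b : nat) x (j : Sig b) m : (0 < b)%N ->
  0 <= x <= 1 -> 0 <= targ R b x j m <= 1.
Proof.
move=> b0 /andP[x0 x1]; have /andP[d0 d1] := @dsum_bnd R b j m.+1 b0.
have bp := @bpos R b m.+1 b0.
rewrite /targ; apply/andP; split.
  by rewrite divr_ge0 // ?addr_ge0 // ltW.
by rewrite ler_pdivrMr // mul1r; lra.
Qed.

Lemma phi_bnd (R : realType) (phi : R -> R) (L : R) t :
  (forall s t, `|phi s - phi t| <= L * `|s - t|) -> 0 <= L ->
  0 <= t <= 1 -> `|phi t| <= `|phi 0| + L.
Proof.
move=> hL L0 /andP[t0 t1].
have := hL t 0; rewrite subr0 [`|t|]ger0_norm // => h.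
have h2 : L * t <= L by rewrite -{2}(mulr1 L) ler_wpM2l.
have e : phi t = phi 0 + (phi t - phi 0) by rewrite addrC subrK.
rewrite e; apply: (le_trans (ler_normD _ _)); lra.
Qed.

Definition Cst (R : realType) (g : R) (phi : R -> R) (L : R) : R :=
  (`|phi 0| + L) / (1 - g).

Arguments Cst {R} g phi L.

Lemma term_bnd (R : realType) (b : nat) (g : R) (phi : R -> R) (L : R) x j m :
  (0 < b)%N -> 0 <= g ->
  (forall s t, `|phi s - phi t| <= L * `|s - t|) -> 0 <= L -> 0 <= x <= 1 ->
  `|term R b g phi x j m| <= (`|phi 0| + L) * g ^+ m.
Proof.
move=> b0 g0 hL L0 hx; rewrite /term normrM ger0_norm ?exprn_ge0 // mulrC.
apply: ler_wpM2r; first exact: exprn_ge0.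
by apply: phi_bnd => //; apply: targ01.
Qed.

Lemma S_tail (R : realType) (b : nat) (g : R) (phi : R -> R) (L : R) x j N :
  (0 < b)%N -> 0 < g < 1 ->
  (forall s t, `|phi s - phi t| <= L * `|s - t|) -> 0 <= L -> 0 <= x <= 1 ->
  `|Sfun R b g phi x j - psum R b g phi x j N| <= Cst g phi L * g ^+ N.
Proof.
move=> b0 hg hL L0 hx; rewrite SfunE /psum /Cst.
apply: (@tail_gen R (term R b g phi x j) _ g hg) => m; apply: term_bnd => //.
by case/andP: hg => /ltW.
Qed.

Lemma Cst_ge0 (R : realType) (g : R) (phi : R -> R) (L : R) :
  g < 1 -> 0 <= L -> 0 <= Cst g phi L.
Proof.
move=> g1 L0; rewrite /Cst divr_ge0 //; last by lra.
by rewrite addr_ge0.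
Qed.

Lemma psum_agree (R : realType) (b : nat) (g : R) (phi : R -> R) x (j j' : Sig b) N :
  (forall k, (k < N)%N -> j k = j' k) -> psum R b g phi x j N = psum R b g phi x j' N.
Proof.
move=> h; rewrite /psum big_nat_cond [RHS]big_nat_cond; apply: eq_bigr => m /andP[/andP[_ mN] _].
rewrite /term /targ /dsum; congr (_ * phi ((_ + _) / _)).
apply: eq_bigr => k _; rewrite h //.
exact: (leq_trans (ltn_ord k)).
Qed.

Lemma S_agree (R : realType) (b : nat) (g : R) (phi : R -> R) (L : R) x (j j' : Sig b) N :
  (0 < b)%N -> 0 < g < 1 ->
  (forall s t, `|phi s - phi t| <= L * `|s - t|) -> 0 <= L -> 0 <= x <= 1 ->
  (forall k, (k < N)%N -> j k = j' k) ->
  `|Sfun R b g phi x j - Sfun R b g phi x j'| <= 2 * Cst g phi L * g ^+ N.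
Proof.
move=> b0 hg hL L0 hx h.
have h1 := @S_tail R b g phi L x j N b0 hg hL L0 hx.
have h2 := @S_tail R b g phi L x j' N b0 hg hL L0 hx.
rewrite (@psum_agree R b g phi x j j' N h) in h1.
have e : Sfun R b g phi x j - Sfun R b g phi x j' =
  (Sfun R b g phi x j - psum R b g phi x j' N) - (Sfun R b g phi x j' - psum R b g phi x j' N).
  by rewrite opprB addrA subrK.
rewrite e; apply: (le_trans (ler_normB _ _)); lra.
Qed.

Lemma geo_sum (R : realType) (g : R) N :
  (1 - g) * \sum_(0 <= m < N) g ^+ m = 1 - g ^+ N.
Proof.
elim: N => [|N IH]; first by rewrite big_geq // mulr0 expr0 subrr.
by rewrite big_nat_recr //= mulrDr IH exprS; ring.
Qed.

Lemma geo_sum_le (R : realType) (g : R) N : 0 <= g < 1 ->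
  \sum_(0 <= m < N) g ^+ m <= (1 - g)^-1.
Proof.
move=> /andP[g0 g1]; have g1' : 0 < 1 - g by lra.
have e : \sum_(0 <= m < N) g ^+ m = (1 - g)^-1 * ((1 - g) * \sum_(0 <= m < N) g ^+ m).
  by rewrite mulrA mulVf ?mul1r // lt0r_neq0.
rewrite e geo_sum.
have : 0 <= g ^+ N by apply: exprn_ge0.
move=> h; apply: (@le_trans _ _ ((1 - g)^-1 * 1)); last by rewrite mulr1.
apply: ler_wpM2l; first by rewrite invr_ge0 ltW.
lra.
Qed.

Lemma psum_lip (R : realType) (b : nat) (g : R) (phi : R -> R) (L : R) x x' (j : Sig b) N :
  (0 < b)%N -> 0 < g < 1 ->
  (forall s t, `|phi s - phi t| <= L * `|s - t|) -> 0 <= L ->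
  `|psum R b g phi x j N - psum R b g phi x' j N| <= L * `|x - x'| / (1 - g).
Proof.
move=> b0 /andP[g0 g1] hL L0.
rewrite /psum -sumrB.
apply: (le_trans (ler_norm_sum _ _ _)).
apply: (@le_trans _ _ (\sum_(0 <= m < N) (L * `|x - x'|) * g ^+ m)).
  apply: ler_sum => m _.
  have gm : 0 <= g ^+ m by rewrite exprn_ge0 // ltW.
  rewrite /term -mulrBr normrM (ger0_norm gm) mulrC.
  apply: ler_wpM2r => //.
  apply: (le_trans (hL _ _)); apply: ler_wpM2l => //.
  rewrite /targ -mulrBl opprD addrACA subrr addr0 normrM.
  have bp := @bpos R b m.+1 b0.
  rewrite [`|_^-1|]ger0_norm; last by rewrite invr_ge0 ltW.
  rewrite -{2}(mulr1 `|x - x'|); apply: ler_wpM2l => //.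
  rewrite invf_le1 //.
  rewrite exprn_ege1 // ler1n //.
rewrite -mulr_sumr; apply: ler_wpM2l; first by rewrite mulr_ge0.
by apply: geo_sum_le; rewrite g1 ltW.
Qed.

Lemma S_lip (R : realType) (b : nat) (g : R) (phi : R -> R) (L : R) x x' (j : Sig b) :
  (0 < b)%N -> 0 < g < 1 ->
  (forall s t, `|phi s - phi t| <= L * `|s - t|) -> 0 <= L ->
  0 <= x <= 1 -> 0 <= x' <= 1 ->
  `|Sfun R b g phi x j - Sfun R b g phi x' j| <= L * `|x - x'| / (1 - g).
Proof.
move=> b0 hg hL L0 hx hx'.
have hg' : 0 <= g < 1 by case/andP: hg => /ltW -> ->.
apply: (@geo_le R g _ _ (2 * Cst g phi L) hg') => N.
have h1 := @S_tail R b g phi L x j N b0 hg hL L0 hx.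
have h2 := @S_tail R b g phi L x' j N b0 hg hL L0 hx'.
have h3 := @psum_lip R b g phi L x x' j N b0 hg hL L0.
set A := Sfun R b g phi x j; set B := Sfun R b g phi x' j.
set a := psum R b g phi x j N; set c := psum R b g phi x' j N.
have e : A - B = (A - a) - (B - c) + (a - c) by ring.
rewrite e; apply: (le_trans (ler_normD _ _)).
have := ler_normB (A - a) (B - c); lra.
Qed.

Definition consS (b : nat) (a : Lam b) (j : Sig b) : Sig b :=
  fun k => if k is k'.+1 then j k' else a.
Arguments consS {b} a j.

Lemma dsum_cons (R : realType) (b : nat) (a : Lam b) (j : Sig b) m :
  dsum R b (consS a j) m.+1 = (a : nat)%:R + b%:R * dsum R b j m.
Proof.
rewrite /dsum big_ord_recl /= expr0 mulr1 mulr_sumr; congr (_ + _).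
by apply: eq_bigr => k _; rewrite /bump /= exprS; ring.
Qed.

Lemma psum_cons (R : realType) (b : nat) (g : R) (phi : R -> R) x (a : Lam b) (j : Sig b) N :
  (0 < b)%N ->
  psum R b g phi x (consS a j) N.+1 =
  phi ((x + (a : nat)%:R) / b%:R) + g * psum R b g phi ((x + (a : nat)%:R) / b%:R) j N.
Proof.
move=> b0; have bn : (b%:R : R) != 0 by rewrite pnatr_eq0 -lt0n.
rewrite /psum big_nat_recl // mulr_sumr; congr (_ + _).
  rewrite /term /targ dsum_cons expr0 mul1r /dsum big_ord0 mulr0 addr0 expr1.
  by [].
apply: eq_bigr => m _; rewrite /term /targ dsum_cons exprS -mulrA; congr (_ * (_ * phi _)).
rewrite (exprS _ m.+1); field.
by rewrite expf_neq0 ?bn.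
Qed.

Lemma S_cons (R : realType) (b : nat) (g : R) (phi : R -> R) (L : R) x (a : Lam b) (j : Sig b) :
  (0 < b)%N -> 0 < g < 1 ->
  (forall s t, `|phi s - phi t| <= L * `|s - t|) -> 0 <= L -> 0 <= x <= 1 ->
  Sfun R b g phi x (consS a j) =
  phi ((x + (a : nat)%:R) / b%:R) + g * Sfun R b g phi ((x + (a : nat)%:R) / b%:R) j.
Proof.
move=> b0 hg hL L0 hx.
have hg' : 0 <= g < 1 by case/andP: hg => /ltW -> ->.
have hx' : 0 <= (x + (a : nat)%:R) / b%:R <= 1.
  have := @targ01 R b x (fun _ => a) 0 b0 hx.
  by rewrite /targ /dsum big_ord1 expr0 mulr1 expr1.
apply/eqP; rewrite -subr_eq0; apply/eqP.
apply: (@geo_zero R g (2 * Cst g phi L) _ hg') => N.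
have h1 := @S_tail R b g phi L x (consS a j) N.+1 b0 hg hL L0 hx.
have h2 := @S_tail R b g phi L _ j N b0 hg hL L0 hx'.
rewrite psum_cons // in h1.
set A := Sfun R b g phi x (consS a j) in h1 *.
set B := Sfun R b g phi _ j in h2 *.
set c := psum R b g phi _ j N in h1 h2 *.
set p := phi _ in h1 *.
have e : A - (p + g * B) = (A - (p + g * c)) - g * (B - c) by ring.
rewrite e; apply: (le_trans (ler_normB _ _)).
rewrite normrM (gtr0_norm (proj1 (andP hg))).
have C0 := @Cst_ge0 R g phi L (proj2 (andP hg)) L0.
have gN : 0 <= g ^+ N by rewrite exprn_ge0 // (proj1 (andP hg')).
have : g * `|B - c| <= g * (Cst g phi L * g ^+ N).
  by apply: ler_wpM2l => //; rewrite (proj1 (andP hg')).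
have : Cst g phi L * g ^+ N.+1 <= Cst g phi L * g ^+ N.
  apply: ler_wpM2l => //; rewrite exprS -{2}(mul1r (g ^+ N)); apply: ler_wpM2r => //.
  by rewrite ltW // (proj2 (andP hg)).
rewrite exprS in h1 *.
nra.
Qed.

Definition catw (b : nat) (u : seq (Lam b)) (i : Sig b) : Sig b := foldr consS i u.
Definition xw (R : realType) (b : nat) (x : R) (u : seq (Lam b)) : R :=
  foldl (fun x (a : Lam b) => (x + (a : nat)%:R) / b%:R) x u.
Arguments catw {b} u i.
Arguments xw {R b} x u.

Lemma xw01 (R : realType) (b : nat) (x : R) (u : seq (Lam b)) : (0 < b)%N ->
  0 <= x <= 1 -> 0 <= xw x u <= 1.
Proof.
move=> b0; elim: u x => [|a u IH] x hx //=.
apply: IH.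
have := @targ01 R b x (fun _ => a) 0 b0 hx.
by rewrite /targ /dsum big_ord1 expr0 mulr1 expr1.
Qed.

Lemma S_scale (R : realType) (b : nat) (g : R) (phi : R -> R) (L : R) x
    (u : seq (Lam b)) (i j : Sig b) :
  (0 < b)%N -> 0 < g < 1 ->
  (forall s t, `|phi s - phi t| <= L * `|s - t|) -> 0 <= L -> 0 <= x <= 1 ->
  Sfun R b g phi x (catw u i) - Sfun R b g phi x (catw u j) =
  g ^+ (size u) * (Sfun R b g phi (xw x u) i - Sfun R b g phi (xw x u) j).
Proof.
move=> b0 hg hL L0; elim: u x => [|a u IH] x hx /=; first by rewrite expr0 mul1r.
have hx' : 0 <= (x + (a : nat)%:R) / b%:R <= 1.
  have := @targ01 R b x (fun _ => a) 0 b0 hx.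
  by rewrite /targ /dsum big_ord1 expr0 mulr1 expr1.
rewrite !(@S_cons R b g phi L) // exprS -mulrA -(IH _ hx'); ring.
Qed.

Lemma catw_map (b : nat) (j0 : Sig b) (i : Sig b) s n k : (k < s)%N ->
  catw (map j0 (iota n s)) i k = j0 (n + k)%N.
Proof.
elim: s n k => [|s IH] n k //= ks.
case: k ks => [|k] ks /=; first by rewrite addn0.
by rewrite IH // addSnnS.
Qed.

Lemma catw_cat (b : nat) (u v : seq (Lam b)) (i : Sig b) :
  catw (u ++ v) i = catw u (catw v i).
Proof. by rewrite /catw foldr_cat. Qed.

Lemma xw_cat (R : realType) (b : nat) (x : R) (u v : seq (Lam b)) :
  xw x (u ++ v) = xw (xw x u) v.
Proof. by rewrite /xw foldl_cat. Qed.

Lemma xw_rcons (R : realType) (b : nat) (x : R) (u : seq (Lam b)) a :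
  xw x (rcons u a) = (xw x u + (a : nat)%:R) / b%:R.
Proof. by rewrite /xw foldl_rcons. Qed.

Lemma digit_exists (R : realType) (b : nat) (s : R) : (0 < b)%N -> 0 <= s <= b%:R ->
  exists a : nat, (a < b)%N /\ a%:R <= s <= a%:R + 1.
Proof.
move=> b0 /andP[s0 sb].
case: (ltnP (Num.truncn s) b) => h.
  exists (Num.truncn s); split => //.
  have /andP[h1 h2] := truncn_itv s0.
  by rewrite h1 /= natr1 ltW.
exists b.-1; split; first by rewrite prednK.
have : (b%:R : R) <= s by rewrite -truncn_ge_nat.
have e : (b.-1%:R : R) + 1 = b%:R by rewrite natr1 prednK.
rewrite e; lra.
Qed.

Lemma approx (R : realType) (b : nat) (x : R) K : (0 < b)%N -> 0 <= x <= 1 ->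
  forall t : R, 0 <= t <= 1 ->
  exists u : seq (Lam b), size u = K /\ `|xw x u - t| <= ((b%:R : R) ^+ K)^-1.
Proof.
move=> b0 hx; elim: K => [|K IH] t ht.
  exists [::]; split => //=; rewrite expr0 invr1.
  case/andP: hx => ? ?; case/andP: ht => ? ?.
  rewrite ler_norml; apply/andP; split; lra.
have bp : (0 : R) < b%:R by rewrite ltr0n.
have [a [ab /andP[a1 a2]]] : exists a : nat, (a < b)%N /\ a%:R <= t * b%:R <= a%:R + 1.
  apply: digit_exists => //; case/andP: ht => t0 t1.
  apply/andP; split; first by rewrite mulr_ge0 // ltW.
  by rewrite ler_piMl // ltW.
have ht' : 0 <= t * b%:R - a%:R <= 1 by lra.
have [u [su hu]] := IH _ ht'.
have aL : (a < b.-1.+1)%N by rewrite prednK.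
exists (rcons u (Ordinal aL)); split; first by rewrite size_rcons su.
rewrite xw_rcons /=.
have e : (xw x u + a%:R) / b%:R - t = (xw x u - (t * b%:R - a%:R)) / b%:R.
  by field; rewrite lt0r_neq0.
rewrite e normrM [`|_^-1|]ger0_norm; last by rewrite invr_ge0 ltW.
rewrite exprSr invfM.
by apply: ler_wpM2r => //; rewrite invr_ge0 ltW.
Qed.

Lemma cylinder_meas (b n : nat) (w : 'I_n -> Lam b) :
  measurable (cylinder b n w : set (SigM b)).
Proof. by apply: sub_sigma_algebra; exists n, w. Qed.

Definition cyl (b n : nat) (j0 : Sig b) : set (Sig b) :=
  [set j | forall k, (k < n)%N -> j k = j0 k].
Arguments cyl {b} n j0.

Lemma cyl_cylinder (b n : nat) (j0 : Sig b) :
  cyl n j0 = cylinder b n (fun k : 'I_n => j0 k).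
Proof.
apply/seteqP; split => j /= h.
  by move=> k; apply: h.
by move=> k kn; exact: (h (Ordinal kn)).
Qed.

Lemma cyl_meas (b n : nat) (j0 : Sig b) : measurable (cyl n j0 : set (SigM b)).
Proof. rewrite cyl_cylinder; exact: cylinder_meas. Qed.

Definition det (b n : nat) (A : set (Sig b)) : Prop :=
  forall j j', (forall k, (k < n)%N -> j k = j' k) -> A j -> A j'.
Arguments det {b} n A.

Lemma det_meas (b n : nat) (A : set (Sig b)) : det n A -> measurable (A : set (SigM b)).
Proof.
move=> hA.
have -> : A = \bigcup_(u in [set u : {ffun 'I_n -> Lam b} |
      exists2 j, A j & forall k : 'I_n, j k = u k]) cylinder b n u.
  apply/seteqP; split => j.
    move=> Aj; exists [ffun k : 'I_n => j k]; first by exists j => // k; rewrite ffunE.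
    by move=> k; rewrite ffunE.
  move=> [u [j' Aj' hj'] hj]; apply: (hA j') => // k kn.
  by rewrite (hj' (Ordinal kn)) (hj (Ordinal kn)).
apply: fin_bigcup_measurable; first exact: finite_finset.
by move=> u _; apply: cylinder_meas.
Qed.

Lemma P_cyl (R : realType) (b : nat) (P : probability (SigM b) R) n (j0 : Sig b) :
  is_uniform_product R b P -> P (cyl n j0) = (((b%:R : R) ^+ n)^-1)%:E.
Proof. by move=> hP; rewrite cyl_cylinder hP. Qed.

Lemma part (R : realType) (b : nat) (P : probability (SigM b) R) n (A : set (SigM b)) :
  measurable A ->
  P A = (\sum_(u \in [set: {ffun 'I_n -> Lam b}]) P (A `&` cylinder b n u))%E.
Proof.
move=> mA; rewrite -measure_fin_bigcup.
- congr (P _); apply/seteqP; split => j.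
    move=> Aj; exists [ffun k : 'I_n => j k] => //; split => // k.
    by rewrite ffunE.
  by move=> [u _ [Aj _]].
- exact: finite_finset.
- move=> u u' _ _ [j [[_ h1] [_ h2]]]; apply/ffunP => k.
  by rewrite -h1 -h2.
- by move=> u _; apply: measurableI => //; apply: cylinder_meas.
Qed.

Definition Fset (R : realType) (b : nat) (g : R) (phi : R -> R) (x y rho : R) (n : nat)
  : set (Sig b) :=
  [set j0 | exists j', cyl n j0 j' /\ `|Sfun R b g phi x j' - y| < rho].

Lemma Fset_det (R : realType) (b : nat) (g : R) (phi : R -> R) (x y rho : R) n :
  det n (Fset R b g phi x y rho n).
Proof.
move=> j j' h [j'' [h1 h2]]; exists j''; split => // k kn.
by rewrite h1 // h.
Qed.

Lemma Fset_mono (R : realType) (b : nat) (g : R) (phi : R -> R) (x y rho : R) n m :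
  (n <= m)%N -> Fset R b g phi x y rho m `<=` Fset R b g phi x y rho n.
Proof.
move=> nm j [j' [h1 h2]]; exists j'; split => // k kn.
by apply: h1; apply: leq_trans nm.
Qed.

Lemma bad_ext (R : realType) (b : nat) (g : R) (phi : R -> R) (L : R) (i j : Sig b)
    (d : R) (K N : nat) x y rho s (j0 : Sig b) :
  (0 < b)%N -> 0 < g < 1 ->
  (forall s t, `|phi s - phi t| <= L * `|s - t|) -> 0 <= L ->
  (forall x, 0 <= x <= 1 -> exists w : seq (Lam b), size w = K /\
      d / 2 <= `|Sfun R b g phi (xw x w) i - Sfun R b g phi (xw x w) j|) ->
  Cst g phi L * g ^+ N <= d / 16 ->
  0 <= x <= 1 -> rho <= g ^+ (s + K) * d / 8 ->
  exists j1, cyl s j0 j1 /\ ~ Fset R b g phi x y rho (s + K + N) j1.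
Proof.
move=> b0 hg hL L0 hU hN hx hrho.
pose pl := map j0 (iota 0 s).
have hpl : 0 <= xw x pl <= 1 by apply: xw01.
have [w0 [sw hw]] := hU _ hpl.
pose ja := catw (pl ++ w0) i.
pose jb := catw (pl ++ w0) j.
have ca : cyl s j0 ja.
  by move=> k ks; rewrite /ja catw_cat catw_map.
have cb : cyl s j0 jb.
  by move=> k ks; rewrite /jb catw_cat catw_map.
have sc := @S_scale R b g phi L x (pl ++ w0) i j b0 hg hL L0 hx.
rewrite xw_cat size_cat size_map size_iota sw -/ja -/jb in sc.
have g0 : 0 <= g by case/andP: hg => /ltW.
have gsK : 0 <= g ^+ (s + K) by rewrite exprn_ge0.
have big : g ^+ (s + K) * (d / 2) <= `|Sfun R b g phi x ja - Sfun R b g phi x jb|.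
  by rewrite sc normrM (ger0_norm gsK); apply: ler_wpM2l.
have near_y : forall jj, Fset R b g phi x y rho (s + K + N) jj ->
    `|Sfun R b g phi x jj - y| < rho + 2 * Cst g phi L * g ^+ (s + K + N).
  move=> jj [j' [h1 h2]].
  have := @S_agree R b g phi L x jj j' (s + K + N) b0 hg hL L0 hx (fun k kn => esym (h1 k kn)).
  move=> h3.
  have e : Sfun R b g phi x jj - y = (Sfun R b g phi x jj - Sfun R b g phi x j') + (Sfun R b g phi x j' - y) by rewrite addrA subrK.
  rewrite e; apply: (le_lt_trans (ler_normD _ _)); lra.
have eN : g ^+ (s + K + N) = g ^+ (s + K) * g ^+ N by rewrite exprD.
have hN' : 2 * Cst g phi L * g ^+ (s + K + N) <= g ^+ (s + K) * (d / 8).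
  rewrite eN mulrCA -mulrA; apply: ler_wpM2l => //; lra.
case: (pselect (Fset R b g phi x y rho (s + K + N) ja)) => Fa; last by exists ja.
case: (pselect (Fset R b g phi x y rho (s + K + N) jb)) => Fb; last by exists jb.
exfalso.
have h1 := near_y _ Fa; have h2 := near_y _ Fb.
have e : Sfun R b g phi x ja - Sfun R b g phi x jb = (Sfun R b g phi x ja - y) - (Sfun R b g phi x jb - y) by rewrite opprB addrA subrK.
have h3 := ler_normB (Sfun R b g phi x ja - y) (Sfun R b g phi x jb - y).
rewrite -e in h3.
have : g ^+ (s + K) * (d / 2) = 2 * (g ^+ (s + K) * d / 8) + 2 * (g ^+ (s + K) * (d / 8)) by rewrite !mulrA; field.
lra.
Qed.

Definition ext (b n : nat) (u : {ffun 'I_n -> Lam b}) : Sig b :=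
  fun k => match insub k with Some k' => u k' | None => ord0 end.
Arguments ext {b n} u.

Lemma cylinder_ext (b n : nat) (u : {ffun 'I_n -> Lam b}) :
  cylinder b n u = cyl n (ext u).
Proof.
rewrite cyl_cylinder; congr (cylinder b n _); apply/funext => k.
by rewrite /ext valK.
Qed.

Lemma step (R : realType) (b : nat) (g : R) (phi : R -> R) (L : R)
    (P : probability (SigM b) R) (i j : Sig b)
    (d : R) (K N : nat) x y rho s :
  (0 < b)%N -> 0 < g < 1 ->
  (forall s t, `|phi s - phi t| <= L * `|s - t|) -> 0 <= L ->
  is_uniform_product R b P ->
  (forall x, 0 <= x <= 1 -> exists w : seq (Lam b), size w = K /\
      d / 2 <= `|Sfun R b g phi (xw x w) i - Sfun R b g phi (xw x w) j|) ->
  Cst g phi L * g ^+ N <= d / 16 ->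
  0 <= x <= 1 -> rho <= g ^+ (s + K) * d / 8 ->
  (P (Fset R b g phi x y rho (s + K + N)) <=
   (1 - ((b%:R : R) ^+ (K + N))^-1)%:E * P (Fset R b g phi x y rho s))%E.
Proof.
move=> b0 hg hL L0 hP hU hN hx hrho.
have bp n : (0 : R) < b%:R ^+ n by apply: bpos.
have c0 : (0 : R) <= 1 - ((b%:R : R) ^+ (K + N))^-1.
  rewrite subr_ge0 invf_le1 //; rewrite exprn_ege1 // ler1n //.
have mF n : measurable (Fset R b g phi x y rho n : set (SigM b)).
  by apply: det_meas; apply: Fset_det.
rewrite (@part R b P s _ (mF (s + K + N)%N)) (@part R b P s _ (mF s)).
rewrite ge0_mule_fsumr; last by move=> u; apply: measure_ge0.
apply: lee_fsum; first exact: finite_finset.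
move=> u _; rewrite cylinder_ext; set j0 := ext u.
have mc n jj : measurable (cyl n jj : set (SigM b)) by apply: cyl_meas.
case: (pselect (exists jj, Fset R b g phi x y rho s jj /\ cyl s j0 jj)) => [[jj [Fj cj]]|nF].
  have sub : cyl s j0 `<=` Fset R b g phi x y rho s.
    move=> j' cj'; apply: (@Fset_det R b g phi x y rho s jj j') => // k ks.
    by rewrite cj // cj'.
  have -> : Fset R b g phi x y rho s `&` cyl s j0 = cyl s j0.
    by apply/seteqP; split => [j' []//|j' cj']; split => //; apply: sub.
  have [j1 [cj1 nF1]] := @bad_ext R b g phi L i j d K N x y rho s j0 b0 hg hL L0 hU hN hx hrho.
  have sub2 : Fset R b g phi x y rho (s + K + N) `&` cyl s j0 `<=` cyl s j0 `\` cyl (s + K + N) j1.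
    move=> j' [Fj' cj']; split => //; rewrite /setC /=; move=> cj1'; apply: nF1.
    by apply: (@Fset_det R b g phi x y rho (s + K + N) j' j1).
  have mA : (Fset R b g phi x y rho (s + K + N) `&` cyl s j0 : set (SigM b)) \in measurable.
    by rewrite inE; apply: measurableI.
  have mB : (cyl s j0 `\` cyl (s + K + N) j1 : set (SigM b)) \in measurable.
    by rewrite inE; apply: measurableD.
  apply: (@le_trans _ _ (P (cyl s j0 `\` cyl (s + K + N) j1))).
    exact: (@le_measure _ _ _ P _ _ mA mB sub2).
  have ci : cyl s j0 `&` cyl (s + K + N) j1 = cyl (s + K + N) j1.
    apply/seteqP; split => [j' []//|j' cj']; split => // k ks.
    rewrite cj' ?cj1 //; apply: leq_trans ks _; rewrite -addnA leq_addr //.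
  have fin : (P (cyl s j0) < +oo)%E by rewrite (@P_cyl R b P _ _ hP) ltry.
  have hD : P (cyl s j0 `\` cyl (s + K + N) j1) = (P (cyl s j0) - P (cyl (s + K + N) j1))%E.
    by rewrite measureD //; congr (_ - P _)%E; exact: ci.
  rewrite hD (@P_cyl R b P s j0 hP) (@P_cyl R b P (s + K + N) j1 hP).
  rewrite -EFinB -EFinM lee_fin.
  have e : ((b%:R : R) ^+ s)^-1 - ((b%:R : R) ^+ (s + K + N))^-1 =
     (1 - ((b%:R : R) ^+ (K + N))^-1) * ((b%:R : R) ^+ s)^-1.
    by rewrite -addnA exprD invfM; ring.
  by rewrite e.
have -> : Fset R b g phi x y rho s `&` cyl s j0 = set0.
  by apply/seteqP; split => [j' [Fj' cj']|//]; apply: nF; exists j'.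
have -> : Fset R b g phi x y rho (s + K + N) `&` cyl s j0 = set0.
  apply/seteqP; split => [j' [Fj' cj']|//]; apply: nF; exists j'; split => //.
  by apply: (@Fset_mono R b g phi x y rho s (s + K + N)) => //; rewrite -addnA leq_addr.
by rewrite measure0 mule0.
Qed.

Lemma iter_step (R : realType) (b : nat) (g : R) (phi : R -> R) (L : R)
    (P : probability (SigM b) R) (i j : Sig b)
    (d : R) (K N : nat) x y rho s m :
  (0 < b)%N -> 0 < g < 1 ->
  (forall s t, `|phi s - phi t| <= L * `|s - t|) -> 0 <= L ->
  is_uniform_product R b P ->
  (forall x, 0 <= x <= 1 -> exists w : seq (Lam b), size w = K /\
      d / 2 <= `|Sfun R b g phi (xw x w) i - Sfun R b g phi (xw x w) j|) ->
  Cst g phi L * g ^+ N <= d / 16 -> 0 <= d ->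
  0 <= x <= 1 -> rho <= g ^+ (s + m * (K + N) + K) * d / 8 ->
  (P (Fset R b g phi x y rho (s + m * (K + N))) <=
   ((1 - ((b%:R : R) ^+ (K + N))^-1) ^+ m)%:E * P (Fset R b g phi x y rho s))%E.
Proof.
move=> b0 hg hL L0 hP hU hN d0 hx hrho.
have g0 : 0 <= g by case/andP: hg => /ltW.
have g1 : g <= 1 by case/andP: hg => _ /ltW.
have c0 : (0 : R) <= 1 - ((b%:R : R) ^+ (K + N))^-1.
  rewrite subr_ge0 invf_le1 ?bpos //; rewrite exprn_ege1 // ler1n //.
suff H : forall t, (t <= m)%N ->
  (P (Fset R b g phi x y rho (s + t * (K + N))) <=
   ((1 - ((b%:R : R) ^+ (K + N))^-1) ^+ t)%:E * P (Fset R b g phi x y rho s))%E.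
  exact: H.
elim => [|t IH] tm.
  by rewrite mul0n addn0 expr0 mul1e.
have -> : (s + t.+1 * (K + N) = s + t * (K + N) + K + N)%N.
  by rewrite mulSn; rewrite [(K + N + _)%N]addnC !addnA.
apply: (le_trans (@step R b g phi L P i j d K N x y rho (s + t * (K + N)) b0 hg hL L0 hP hU hN hx _)).
  apply: (le_trans hrho); rewrite -!mulrA; apply: ler_wpM2r.
    by rewrite mulr_ge0 // invr_ge0.
  apply: ler_wiXn2l => //.
  rewrite leq_add2r leq_add2l leq_mul2r; apply/orP; right; exact: ltnW.
rewrite exprS EFinM -muleA; apply: lee_wpmul2l; first by rewrite lee_fin.
by apply: IH; apply: ltnW.
Qed.

Lemma ballE' (R : realType) (y e z : R) : ball y e z <-> `|z - y| < e.
Proof. by rewrite -ball_normE /= distrC. Qed.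

Lemma meas_pre (R : realType) (b : nat) (g : R) (phi : R -> R) (L : R) x y rho :
  (0 < b)%N -> 0 < g < 1 ->
  (forall s t, `|phi s - phi t| <= L * `|s - t|) -> 0 <= L -> 0 <= x <= 1 ->
  measurable ((Sfun R b g phi x : SigM b -> R) @^-1` ball y rho).
Proof.
move=> b0 hg hL L0 hx.
have hg' : 0 <= g < 1 by case/andP: hg => /ltW -> ->.
have C0 := @Cst_ge0 R g phi L (proj2 (andP hg)) L0.
have -> : (Sfun R b g phi x : SigM b -> R) @^-1` ball y rho =
  \bigcup_M [set j0 : Sig b | forall j', cyl M j0 j' -> `|Sfun R b g phi x j' - y| < rho].
  apply/seteqP; split => j0 /=.
    move=> /ballE' h.
    have hp : 0 < (rho - `|Sfun R b g phi x j0 - y|) / (2 * Cst g phi L + 1).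
      by rewrite divr_gt0 // ?subr_gt0 //; lra.
    have [M hM] := @geo_small R _ _ hg' hp.
    exists M => // j' cj'.
    have h1 := @S_agree R b g phi L x j' j0 M b0 hg hL L0 hx cj'.
    have h2 : (2 * Cst g phi L) * g ^+ M <= (2 * Cst g phi L + 1) * g ^+ M.
      by apply: ler_wpM2r; [rewrite exprn_ge0 // (proj1 (andP hg')) | lra].
    rewrite ltr_pdivlMr in hM; last lra.
    have e : Sfun R b g phi x j' - y = (Sfun R b g phi x j' - Sfun R b g phi x j0) + (Sfun R b g phi x j0 - y) by rewrite addrA subrK.
    rewrite e; apply: (le_lt_trans (ler_normD _ _)).
    rewrite mulrC in hM; lra.
  move=> [M _ h]; apply/ballE'; apply: h => k //.
apply: bigcupT_measurable => M; apply: (@det_meas b M).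
move=> j j' hjj' /= h j'' cj''; apply: h => k kM.
by rewrite cj'' // hjj'.
Qed.

Theorem proposition5p4 (R : realType) (b : nat) (gamma : R) (phi : R -> R)
    (P : probability (SigM b) R) :
  (2 <= b)%N -> 0 < gamma < 1 ->
  Zperiodic R phi -> is_lipschitz R phi -> condH R b gamma phi ->
  is_uniform_product R b P ->
  forall eps : R, 0 < eps ->
  exists delta : R, 0 < delta /\
    forall (x y r : R), 0 <= x <= 1 -> 0 < r < 1 ->
      (mx R b gamma phi P x (ball y (delta * r))
         <= eps%:E * mx R b gamma phi P x (ball y r))%E.
Proof.
move=> hb hg _ [L0' hL0] hH hP eps eps0.
set g := gamma.
pose L := `|L0'|.
have hL : forall s t, `|phi s - phi t| <= L * `|s - t|.
  by move=> s t; apply: (le_trans (hL0 s t)); apply: ler_wpM2r => //; exact: ler_norm.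
have L0 : 0 <= L by rewrite /L normr_ge0.
have b0 : (0 < b)%N by exact: ltnW hb.
have g0 : 0 < g by case/andP: hg.
have g1 : g < 1 by case/andP: hg.
have hg' : 0 <= g < 1 by rewrite ltW.
pose i : Sig b := fun _ => ord0.
pose j : Sig b := fun _ => ord_max.
have ij : i <> j.
  move=> /(congr1 (fun f : Sig b => nat_of_ord (f 0%N))) /= e.
  by move: hb; rewrite -(prednK b0) -e.
have [x0 [hx0 nz]] : exists x0, 0 <= x0 <= 1 /\
    Sfun R b g phi x0 j - Sfun R b g phi x0 i != 0.
  apply: contrapT => hno; apply: (hH i j ij) => x hx.
  apply/eqP; apply: contraT => hne; exfalso; apply: hno; exists x; split => //.
pose d := `|Sfun R b g phi x0 i - Sfun R b g phi x0 j|.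
have d0 : 0 < d by rewrite /d distrC normr_gt0.
pose C := Cst g phi L.
have C0 : 0 <= C by apply: Cst_ge0.
have dC : d <= 2 * C.
  have := @S_agree R b g phi L x0 i j 0 b0 hg hL L0 hx0 (fun k kn => False_ind _ (notF kn)).
  by rewrite expr0 mulr1.
have hq : 0 <= (b%:R : R)^-1 < 1.
  by rewrite invr_ge0 ler0n /= invf_lt1 ?ltr0n // ltr1n.
have e1 : 0 < d * (1 - g) / (4 * (L + 1)).
  by rewrite divr_gt0 // ?mulr_gt0 //; lra.
have [K hK] := @geo_small R _ _ hq e1.
rewrite exprVn in hK.
have U : forall x, 0 <= x <= 1 -> exists w : seq (Lam b), size w = K /\
    d / 2 <= `|Sfun R b g phi (xw x w) i - Sfun R b g phi (xw x w) j|.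
  move=> x hx; have [w [sw hw]] := @approx R b x K b0 hx x0 hx0.
  exists w; split => //.
  have hxw := @xw01 R b x w b0 hx.
  have l1 := @S_lip R b g phi L (xw x w) x0 i b0 hg hL L0 hxw hx0.
  have l2 := @S_lip R b g phi L (xw x w) x0 j b0 hg hL L0 hxw hx0.
  have q0 : 0 <= ((b%:R : R) ^+ K)^-1 by rewrite invr_ge0 exprn_ge0.
  have h3 : L * `|xw x w - x0| <= d * (1 - g) / 4.
    apply: (@le_trans _ _ ((L + 1) * ((b%:R : R) ^+ K)^-1)).
      apply: (@le_trans _ _ (L * ((b%:R : R) ^+ K)^-1)); first exact: (ler_wpM2l L0 hw).
      by apply: ler_wpM2r => //; lra.
    rewrite -ler_pdivlMl; last lra.
    have L1 : L + 1 != 0 by rewrite gt_eqF //; lra.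
    have -> : (L + 1)^-1 * (d * (1 - g) / 4) = d * (1 - g) / (4 * (L + 1)) by field.
    exact: ltW hK.
  have h4 : L * `|xw x w - x0| / (1 - g) <= d / 4.
    by rewrite ler_pdivrMr; [lra|lra].
  move: l1 l2 h4; set A := Sfun R b g phi (xw x w) i; set B := Sfun R b g phi (xw x w) j.
  set A0 := Sfun R b g phi x0 i; set B0 := Sfun R b g phi x0 j => l1 l2 h4.
  have dd : d = `|A0 - B0| by [].
  have e : A0 - B0 = (A - B) - (A - A0) + (B - B0) by ring.
  have t1 : `|A0 - B0| <= `|A - B| + `|A - A0| + `|B - B0|.
    rewrite e; apply: (le_trans (ler_normD _ _)); rewrite lerD2r.
    by apply: (le_trans (ler_normB _ _)).
  lra.
have e2 : 0 < d / (16 * (C + 1)) by rewrite divr_gt0 //; lra.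
have [N hN] := @geo_small R _ _ hg' e2.
have hN' : C * g ^+ N <= d / 16.
  have gN : 0 <= g ^+ N by rewrite exprn_ge0 // ltW.
  rewrite ltr_pdivlMr in hN; last lra.
  have : C * g ^+ N <= (C + 1) * g ^+ N by apply: ler_wpM2r => //; lra.
  rewrite mulrC in hN; lra.
pose c := 1 - ((b%:R : R) ^+ (K + N))^-1.
have hc : 0 <= c < 1.
  have bp := @bpos R b (K + N) b0.
  rewrite /c; apply/andP; split.
    by rewrite subr_ge0 invf_le1 // exprn_ege1 // ler1n.
  by rewrite ltrBlDr ltrDl invr_gt0.
have [m hm] := @geo_small R _ _ hc eps0.
pose C2 := 2 * C + 1.
have C2p : 0 < C2 by rewrite /C2; lra.
pose T := (m * (K + N))%N.
pose delta := g ^+ (T + K + 1) * d / (16 * C2).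
have gp n : 0 < g ^+ n by rewrite exprn_gt0.
exists delta; split.
  by rewrite /delta divr_gt0 ?mulr_gt0 //; lra.
move=> x y r hx /andP[r0 r1].
have ex : exists n, C2 * g ^+ n <= r / 2.
  have e3 : 0 < r / (2 * C2) by rewrite divr_gt0 //; lra.
  have [n hn] := @geo_small R _ _ hg' e3.
  exists n; rewrite ltr_pdivlMr in hn; last lra.
  rewrite mulrC; lra.
case: (ex_minnP ex) => n hn hmin.
have gn : g * r / (2 * C2) <= g ^+ n.
  rewrite ler_pdivrMr; last lra.
  case: n hn hmin => [|n'] hn hmin.
    rewrite expr0 mul1r; have := gp 1%N; rewrite expr1 => _.
    have : g * r <= 1 * 1 by apply: ler_pM; [exact: ltW|exact: ltW|exact: ltW|exact: ltW].
    rewrite /C2; nra.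
  have hlt : r / 2 < C2 * g ^+ n'.
    by rewrite ltNge; apply/negP => h; have := hmin n' h; rewrite ltnn.
  rewrite exprS; have := gp n'; nra.
pose rho := delta * r.
have hrho : rho <= g ^+ (n + T + K) * d / 8.
  have key : rho = (g ^+ (T + K) * d / 8) * (g * r / (2 * C2)).
    rewrite /rho /delta exprD expr1; field; lra.
  have e4 : g ^+ (n + T + K) = g ^+ (T + K) * g ^+ n by rewrite -addnA addnC exprD.
  rewrite key e4.
  have -> : g ^+ (T + K) * g ^+ n * d / 8 = (g ^+ (T + K) * d / 8) * g ^+ n by ring.
  apply: ler_wpM2l => //.
  by rewrite mulr_ge0 ?divr_ge0 ?mulr_ge0 // ltW.
have mE1 := @meas_pre R b g phi L x y rho b0 hg hL L0 hx.
have mE2 := @meas_pre R b g phi L x y r b0 hg hL L0 hx.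
have mF k : measurable (Fset R b g phi x y rho k : set (SigM b)).
  by apply: det_meas; apply: Fset_det.
have sub1 : (Sfun R b g phi x : SigM b -> R) @^-1` ball y rho `<=`
    Fset R b g phi x y rho (n + T).
  by move=> jj /ballE' h; exists jj; split.
have dl : delta <= 1 / 2.
  have gT : g ^+ (T + K + 1) <= 1 by rewrite exprn_ile1 // ltW.
  have gT0 : 0 <= g ^+ (T + K + 1) by rewrite exprn_ge0 // ltW.
  have ed : delta * (16 * C2) = g ^+ (T + K + 1) * d.
    by rewrite /delta; field; lra.
  have : g ^+ (T + K + 1) * d <= 1 * d by apply: ler_wpM2r => //; exact: ltW.
  rewrite /C2 in ed C2p; nra.
have sub2 : Fset R b g phi x y rho n `<=`
    (Sfun R b g phi x : SigM b -> R) @^-1` ball y r.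
  move=> jj [j' [cj h]]; apply/ballE'.
  have h1 := @S_agree R b g phi L x jj j' n b0 hg hL L0 hx (fun k kn => esym (cj k kn)).
  have h2 : rho <= r / 2 by rewrite /rho; nra.
  have e : Sfun R b g phi x jj - y = (Sfun R b g phi x jj - Sfun R b g phi x j') + (Sfun R b g phi x j' - y) by rewrite addrA subrK.
  rewrite e; apply: (le_lt_trans (ler_normD _ _)).
  have : 2 * Cst g phi L * g ^+ n <= C2 * g ^+ n.
    by apply: ler_wpM2r; [rewrite exprn_ge0 // ltW | rewrite /C2 /C; lra].
  lra.
rewrite /mx.
apply: (@le_trans _ _ (P (Fset R b g phi x y rho (n + T)))).
  exact: (@le_measure _ _ _ P _ _ (mem_set mE1) (mem_set (mF _)) sub1).
apply: (le_trans (@iter_step R b g phi L P i j d K N x y rho n m b0 hg hL L0 hP U hN' (ltW d0) hx hrho)).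
apply: (@le_trans _ _ (eps%:E * P (Fset R b g phi x y rho n))%E).
  apply: lee_wpmul2r; first exact: measure_ge0.
  by rewrite lee_fin; apply: ltW.
apply: lee_wpmul2l; first by rewrite lee_fin ltW.
exact: (@le_measure _ _ _ P _ _ (mem_set (mF _)) (mem_set mE2) sub2).
Qed.
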